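(* Let $a\neq 0$ be a real constant and $f,g$ smooth real functions, and consider the affine factorable surface of the second kind $\phi(x,z)=(x,\,f(x)\,g(z+ax),\,z)$ in $G_3^1$ with $1-(fg')^2>0$. If its mean curvature $H$ vanishes identically, then the surface $y(x,z)=f(x)g(z+ax)$ is one of the following, where $f_o,g_o,b_1,\dots,b_{13}$ are real constants: (1) $y=f_o(b_1(z+ax)+b_2)$, or $y=f_o\left(\sqrt{\frac{a^2-1}{a^2f_o^2}}\,(z+ax)+b_3\right)$; (2) $y=g_o(b_4x+b_5)$; (3) $y=b_8(b_6x+b_7)$, or $y=(b_6x+b_7)(b_9(z+ax)+b_{10})$; (4) $y=(b_{12}x+b_{13})(b_{11}(z+ax)+b_{12})$, or $y=\frac{1}{b_{11}}(b_{11}(z+ax)+b_{12})$.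
   Context: The pseudo-Galilean space $G_3^1$ is $\mathbb{R}^3$ with the scalar product $\langle X,Y\rangle=x_1y_1$ if $x_1\neq0$ or $y_1\neq0$, and $\langle X,Y\rangle=x_2y_2-x_3y_3$ if $x_1=y_1=0$. An affine factorable surface of the second kind is $\phi(x,z)=(x,f(x)g(z+ax),z)$ with $a\neq0$ constant. Here $f'$ denotes $df/dx$ and $g',g''$ denote derivatives of $g$ with respect to its argument $v=z+ax$. The mean curvature of this surface is taken to be $H=\dfrac{\Omega}{2(1-(fg')^2)^{3/2}}$, where $\Omega=(1-a^2)fg''-f''g-2af'g'+f^2f''g'^2g+2af'f^2g'^3+a^2f^3g'^2g''$. *)

(* Defs.v *)
From Stdlib Require Import Reals.
Open Scope R_scope.

(* [derivs f D]: D is the sequence of all successive derivatives of f,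
   D 0 = f and D (n+1) = (D n)'.  Existence of such D <-> f is smooth (C^oo);
   D 1 and D 2 are then f' and f''. *)
Definition derivs (f : R -> R) (D : nat -> R -> R) : Prop :=
  D 0%nat = f /\ forall (n : nat) (x : R), derivable_pt_lim (D n) x (D (S n) x).

Definition Omega (a f f1 f2 g g1 g2 : R) : R :=
  (1 - a^2) * f * g2 - f2 * g - 2 * a * f1 * g1
  + f^2 * f2 * g1^2 * g + 2 * a * f1 * f^2 * g1^3 + a^2 * f^3 * g1^2 * g2.

(* Mean curvature H = Omega / (2 (1 - (f g')^2)^(3/2)) of
   phi(x,z) = (x, f(x) g(z+ax), z) in the pseudo-Galilean space G_3^1 *)
Definition meanCurv (a : R) (Df Dg : nat -> R -> R) (x z : R) : R :=
  let v := z + a * x in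
  Omega a (Df 0%nat x) (Df 1%nat x) (Df 2%nat x)
          (Dg 0%nat v) (Dg 1%nat v) (Dg 2%nat v)
  / (2 * Rpower (1 - (Df 0%nat x * Dg 1%nat v)^2) (3/2)).

(* Main.v *)
Require Import Defs.
From Stdlib Require Import Reals Lra Psatz FunctionalExtensionality.
Open Scope R_scope.

Lemma affine_of (h h' : R -> R) (B : R) :
  (forall x, derivable_pt_lim h x (h' x)) -> (forall x, h' x = B) ->
  forall x, h x = h 0 + B * x.
Proof.
  intros Hd HB x.
  destruct (Rtotal_order x 0) as [Hx|[Hx|Hx]].
  - destruct (MVT_cor2 h h' x 0 Hx (fun c _ => Hd c)) as [c [Hc _]].
    rewrite HB in Hc. lra.
  - subst. lra.
  - destruct (MVT_cor2 h h' 0 x Hx (fun c _ => Hd c)) as [c [Hc _]].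
    rewrite HB in Hc. lra.
Qed.

Lemma deriv_of_const (h h' : R -> R) (c : R) :
  (forall x, h x = c) -> (forall x, derivable_pt_lim h x (h' x)) ->
  forall x, h' x = 0.
Proof.
  intros Hc Hd x.
  assert (E : h = fct_cte c) by (apply functional_extensionality; intro; apply Hc).
  specialize (Hd x). rewrite E in Hd.
  exact (uniqueness_limite _ _ _ _ Hd (derivable_pt_lim_const c x)).
Qed.

Lemma cont_of (h h' : R -> R) :
  (forall x, derivable_pt_lim h x (h' x)) -> continuity h.
Proof.
  intros Hd x. apply derivable_continuous_pt. exists (h' x). apply Hd.
Qed.

Lemma ivt_val (f : R -> R) p q F :
  continuity f -> (f p - F) * (f q - F) <= 0 -> exists z, f z = F.
Proof.
  intros Hc H.
  assert (Hc' : continuity (fun x => f x - F)).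
  { intro x. apply continuity_pt_minus. apply Hc. apply continuity_pt_const. intros ? ?; reflexivity. }
  destruct (Rle_dec p q) as [Hpq|Hpq].
  - destruct (IVT_cor _ p q Hc' Hpq H) as [z [_ Hz]]. exists z; lra.
  - assert (Hqp : q <= p) by lra.
    assert (H' : (f q - F) * (f p - F) <= 0) by lra.
    destruct (IVT_cor _ q p Hc' Hqp H') as [z [_ Hz]]. exists z; lra.
Qed.

Definition lag (S : R -> R) (t1 t2 t3 t4 t : R) : R :=
  S t1 * ((t-t2)*(t-t3)*(t-t4)) / ((t1-t2)*(t1-t3)*(t1-t4))
+ S t2 * ((t-t1)*(t-t3)*(t-t4)) / ((t2-t1)*(t2-t3)*(t2-t4))
+ S t3 * ((t-t1)*(t-t2)*(t-t4)) / ((t3-t1)*(t3-t2)*(t3-t4))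
+ S t4 * ((t-t1)*(t-t2)*(t-t3)) / ((t4-t1)*(t4-t2)*(t4-t3)).

Definition cubicL (S : R -> R) : Prop :=
  forall t1 t2 t3 t4 t, t1 <> t2 -> t1 <> t3 -> t1 <> t4 -> t2 <> t3 -> t2 <> t4 -> t3 <> t4 ->
  S t = lag S t1 t2 t3 t4 t.

Lemma f_const (f S : R -> R) :
  continuity f -> cubicL S -> (exists t, S t <> 0) ->
  (forall x, f x = 0 \/ S (f x ^ 2) = 0) -> forall x, f x = f 0.
Proof.
  intros Hc HS [t0 Ht0] Hz x.
  destruct (Req_dec (f x) (f 0)) as [E|E]; [exact E|exfalso].
  set (al := Rmin (f x) (f 0)). set (be := Rmax (f x) (f 0)).
  assert (Hab : al < be).
  { unfold al, be, Rmin, Rmax. destruct Rle_dec; lra. }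
  assert (Hbet : forall F, al < F < be -> exists z, f z = F).
  { intros F HF. apply (ivt_val f x 0 F Hc).
    unfold al, be, Rmin, Rmax in HF. destruct Rle_dec in HF; nra. }
  assert (Hroot : forall F, al < F < be -> F <> 0 -> S (F^2) = 0).
  { intros F HF HF0. destruct (Hbet F HF) as [z Hz'].
    destruct (Hz z) as [H|H]; rewrite Hz' in H; [lra|exact H]. }
  assert (Hgen : forall a' b', al <= a' -> a' < b' -> b' <= be -> (0 <= a' \/ b' <= 0) ->
     False).
  { intros a' b' H1 H2 H3 H4.
    set (d := (b' - a') / 5).
    assert (Hd : 0 < d) by (unfold d; lra).
    set (F1 := a' + d). set (F2 := a' + 2*d). set (F3 := a' + 3*d). set (F4 := a' + 4*d).
    assert (b' = a' + 5 * d) by (unfold d; field).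
    assert (Z : forall F, F = F1 \/ F = F2 \/ F = F3 \/ F = F4 -> S (F^2) = 0).
    { intros F HF. apply Hroot; unfold F1, F2, F3, F4 in HF;
      destruct HF as [ -> | [ -> | [ -> | -> ]]]; nra. }
    assert (Dst : forall u w, (u = F1 \/ u = F2 \/ u = F3 \/ u = F4) ->
              (w = F1 \/ w = F2 \/ w = F3 \/ w = F4) -> u < w -> u^2 <> w^2).
    { intros u w Hu Hw Huw. unfold F1, F2, F3, F4 in *.
      destruct Hu as [ -> | [ -> | [ -> | -> ]]]; destruct Hw as [ -> | [ -> | [ -> | -> ]]];
      destruct H4; nra. }
    assert (L := HS (F1^2) (F2^2) (F3^2) (F4^2) t0).
    rewrite L in Ht0.
    - apply Ht0. unfold lag.
      rewrite (Z F1), (Z F2), (Z F3), (Z F4); try tauto. unfold Rdiv; ring.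
    - apply Dst; unfold F1,F2,F3,F4; try tauto; lra.
    - apply Dst; unfold F1,F2,F3,F4; try tauto; lra.
    - apply Dst; unfold F1,F2,F3,F4; try tauto; lra.
    - apply Dst; unfold F1,F2,F3,F4; try tauto; lra.
    - apply Dst; unfold F1,F2,F3,F4; try tauto; lra.
    - apply Dst; unfold F1,F2,F3,F4; try tauto; lra. }
  destruct (Rlt_dec 0 be) as [Hb|Hb].
  - apply (Hgen (Rmax al 0) be); unfold Rmax; destruct (Rle_dec al 0); lra.
  - apply (Hgen al be); lra.
Qed.

Lemma chain3 q0 q1 q2 q3 :
  ((0 <= q0 /\ q0 < q1 /\ q1 < q2 /\ q2 < q3) \/ (q3 < q2 /\ q2 < q1 /\ q1 < q0 /\ q0 <= 0)) ->
  q1 <> 0 /\ q2 <> 0 /\ q3 <> 0 /\ q1^2 <> q2^2 /\ q1^2 <> q3^2 /\ q2^2 <> q3^2.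
Proof. intros [H|H]; repeat split; nra. Qed.

Lemma pick3 (h : R -> R) v0 alp s : alp > 0 -> s <> 0 ->
  (forall u w, v0 - alp < u -> u < w -> w < v0 + alp -> (h w - h u) * s > 0) ->
  exists w1 w2 w3, Rabs (w1 - v0) < alp /\ Rabs (w2 - v0) < alp /\ Rabs (w3 - v0) < alp /\
    h w1 <> 0 /\ h w2 <> 0 /\ h w3 <> 0 /\
    h w1^2 <> h w2^2 /\ h w1^2 <> h w3^2 /\ h w2^2 <> h w3^2.
Proof.
  intros Ha Hs M.
  set (p := fun j => v0 + j * alp / 4).
  assert (Hp : forall j, -4 < j < 4 -> Rabs (p j - v0) < alp).
  { intros j Hj. unfold p; cbv beta. replace (v0 + j * alp / 4 - v0) with (j * alp / 4) by ring.
    apply Rabs_def1; nra. }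
  assert (Mp : forall i j, -4 < i -> i < j -> j < 4 -> (h (p j) - h (p i)) * s > 0).
  { intros i j Hi Hij Hj. apply M; unfold p; cbv beta; nra. }
  assert (E0 : p 0 = v0). { unfold p; cbv beta. lra. }
  assert (M1 := Mp 0 1 ltac:(lra) ltac:(lra) ltac:(lra)).
  assert (M2 := Mp 1 2 ltac:(lra) ltac:(lra) ltac:(lra)).
  assert (M3 := Mp 2 3 ltac:(lra) ltac:(lra) ltac:(lra)).
  assert (N1 := Mp (-1) 0 ltac:(lra) ltac:(lra) ltac:(lra)).
  assert (N2 := Mp (-2) (-1) ltac:(lra) ltac:(lra) ltac:(lra)).
  assert (N3 := Mp (-3) (-2) ltac:(lra) ltac:(lra) ltac:(lra)).
  destruct (Rle_dec 0 (h (p 0))) as [Hq|Hq]; destruct (Rlt_dec 0 s) as [Hs'|Hs'].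
  - destruct (chain3 (h (p 0)) (h (p 1)) (h (p 2)) (h (p 3))) as (A1&A2&A3&A4&A5&A6).
    { left. repeat split; nra. }
    exists (p 1), (p 2), (p 3). repeat split; auto; apply Hp; lra.
  - destruct (chain3 (h (p 0)) (h (p (-1))) (h (p (-2))) (h (p (-3)))) as (A1&A2&A3&A4&A5&A6).
    { left. repeat split; nra. }
    exists (p (-1)), (p (-2)), (p (-3)). repeat split; auto; apply Hp; lra.
  - destruct (chain3 (h (p 0)) (h (p (-1))) (h (p (-2))) (h (p (-3)))) as (A1&A2&A3&A4&A5&A6).
    { right. repeat split; nra. }
    exists (p (-1)), (p (-2)), (p (-3)). repeat split; auto; apply Hp; lra.
  - destruct (chain3 (h (p 0)) (h (p 1)) (h (p 2)) (h (p 3))) as (A1&A2&A3&A4&A5&A6).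
    { right. repeat split; nra. }
    exists (p 1), (p 2), (p 3). repeat split; auto; apply Hp; lra.
Qed.

Lemma Omega_eq a F Q P G G1 G2 :
  Omega a F Q P G G1 G2 =
  F*G2*(1-a^2+a^2*F^2*G1^2) - (1-F^2*G1^2)*(P*G + 2*a*Q*G1).
Proof. unfold Omega. ring. Qed.

Definition S2 a G1a G2a G1b G2b ka kb t :=
  G1b*G2a*(1-a^2+a^2*t*ka)*(1-t*kb) - G1a*G2b*(1-a^2+a^2*t*kb)*(1-t*ka).

Lemma S2_rel a F Q P Ga G1a G2a Gb G1b G2b :
  Ga*G1b - Gb*G1a = 0 ->
  Omega a F Q P Ga G1a G2a = 0 -> Omega a F Q P Gb G1b G2b = 0 ->
  F * S2 a G1a G2a G1b G2b (G1a^2) (G1b^2) (F^2) = 0.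
Proof.
  intros Hm H1 H2.
  transitivity (G1b*(1-F^2*G1b^2)*Omega a F Q P Ga G1a G2a
              - G1a*(1-F^2*G1a^2)*Omega a F Q P Gb G1b G2b
              + (1-F^2*G1a^2)*(1-F^2*G1b^2)*P*(Ga*G1b - Gb*G1a)).
  - unfold S2, Omega. ring.
  - rewrite H1, H2, Hm. ring.
Qed.

Definition S3 a G_1 G1_1 G2_1 G_2 G1_2 G2_2 G_3 G1_3 G2_3 t :=
  let k1 := G1_1^2 in let k2 := G1_2^2 in let k3 := G1_3^2 in
  (G_2*G1_3 - G_3*G1_2)*G2_1*(1-a^2+a^2*t*k1)*(1-t*k2)*(1-t*k3)
+ (G_3*G1_1 - G_1*G1_3)*G2_2*(1-a^2+a^2*t*k2)*(1-t*k1)*(1-t*k3)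
+ (G_1*G1_2 - G_2*G1_1)*G2_3*(1-a^2+a^2*t*k3)*(1-t*k1)*(1-t*k2).

Lemma S3_rel a F Q P G_1 G1_1 G2_1 G_2 G1_2 G2_2 G_3 G1_3 G2_3 :
  Omega a F Q P G_1 G1_1 G2_1 = 0 -> Omega a F Q P G_2 G1_2 G2_2 = 0 ->
  Omega a F Q P G_3 G1_3 G2_3 = 0 ->
  F * S3 a G_1 G1_1 G2_1 G_2 G1_2 G2_2 G_3 G1_3 G2_3 (F^2) = 0.
Proof.
  intros H1 H2 H3.
  transitivity ((G_2*G1_3 - G_3*G1_2)*(1-F^2*G1_2^2)*(1-F^2*G1_3^2)*Omega a F Q P G_1 G1_1 G2_1
   + (G_3*G1_1 - G_1*G1_3)*(1-F^2*G1_1^2)*(1-F^2*G1_3^2)*Omega a F Q P G_2 G1_2 G2_2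
   + (G_1*G1_2 - G_2*G1_1)*(1-F^2*G1_1^2)*(1-F^2*G1_2^2)*Omega a F Q P G_3 G1_3 G2_3).
  - unfold S3, Omega. ring.
  - rewrite H1, H2, H3. ring.
Qed.

Lemma S2_cubic a G1a G2a G1b G2b ka kb : cubicL (S2 a G1a G2a G1b G2b ka kb).
Proof.
  intros t1 t2 t3 t4 t H12 H13 H14 H23 H24 H34. unfold lag, S2. field.
  repeat split; intro; lra.
Qed.

Lemma S3_cubic a G_1 G1_1 G2_1 G_2 G1_2 G2_2 G_3 G1_3 G2_3 :
  cubicL (S3 a G_1 G1_1 G2_1 G_2 G1_2 G2_2 G_3 G1_3 G2_3).
Proof.
  intros t1 t2 t3 t4 t H12 H13 H14 H23 H24 H34. unfold lag, S3. field.
  repeat split; intro; lra.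
Qed.

Theorem mainTheorem2 (a : R) (f g : R -> R) (Df Dg : nat -> R -> R) :
  a <> 0 ->
  derivs f Df -> derivs g Dg ->
  (forall x z, 1 - (f x * Dg 1%nat (z + a * x))^2 > 0) ->
  (forall x z, meanCurv a Df Dg x z = 0) ->
  exists fo go b1 b2 b3 b4 b5 b6 b7 b8 b9 b10 b11 b12 b13 : R,
    (forall x z, f x * g (z + a * x) = fo * (b1 * (z + a * x) + b2)) \/
    (forall x z, f x * g (z + a * x) =
        fo * (sqrt ((a^2 - 1) / (a^2 * fo^2)) * (z + a * x) + b3)) \/
    (forall x z, f x * g (z + a * x) = go * (b4 * x + b5)) \/
    (forall x z, f x * g (z + a * x) = b8 * (b6 * x + b7)) \/
    (forall x z, f x * g (z + a * x) = (b6 * x + b7) * (b9 * (z + a * x) + b10)) \/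
    (forall x z, f x * g (z + a * x) = (b12 * x + b13) * (b11 * (z + a * x) + b12)) \/
    (forall x z, f x * g (z + a * x) = 1 / b11 * (b11 * (z + a * x) + b12)).
Proof.
  intros Ha [Hf0 Hfd] [Hg0 Hgd] Hcon Hmc.
  subst f g.
  assert (Om : forall x v, Omega a (Df 0%nat x) (Df 1%nat x) (Df 2%nat x)
                 (Dg 0%nat v) (Dg 1%nat v) (Dg 2%nat v) = 0).
  { intros x v. specialize (Hmc x (v - a * x)). unfold meanCurv in Hmc.
    replace (v - a * x + a * x) with v in Hmc by ring.
    set (d := 2 * Rpower (1 - (Df 0%nat x * Dg 1%nat v) ^ 2) (3 / 2)) in Hmc.
    assert (Hd : d > 0) by (unfold d, Rpower; generalize (exp_pos ((3/2) * ln (1 - (Df 0%nat x * Dg 1%nat v) ^ 2))); lra).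
    unfold Rdiv in Hmc. apply Rmult_integral in Hmc. destruct Hmc as [Hm|Hm]; auto.
    exfalso. assert (/ d <> 0) by (apply Rinv_neq_0_compat; lra). contradiction. }
  assert (Con : forall x v, 1 - (Df 0%nat x * Dg 1%nat v)^2 > 0).
  { intros x v. specialize (Hcon x (v - a * x)).
    replace (v - a * x + a * x) with v in Hcon by ring. exact Hcon. }
  assert (Zero : (forall x, Df 0%nat x = 0) ->
    exists fo go b1 b2 b3 b4 b5 b6 b7 b8 b9 b10 b11 b12 b13 : R,
    (forall x z, Df 0%nat x * Dg 0%nat (z + a * x) = fo * (b1 * (z + a * x) + b2)) \/
    (forall x z, Df 0%nat x * Dg 0%nat (z + a * x) =
        fo * (sqrt ((a^2 - 1) / (a^2 * fo^2)) * (z + a * x) + b3)) \/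
    (forall x z, Df 0%nat x * Dg 0%nat (z + a * x) = go * (b4 * x + b5)) \/
    (forall x z, Df 0%nat x * Dg 0%nat (z + a * x) = b8 * (b6 * x + b7)) \/
    (forall x z, Df 0%nat x * Dg 0%nat (z + a * x) = (b6 * x + b7) * (b9 * (z + a * x) + b10)) \/
    (forall x z, Df 0%nat x * Dg 0%nat (z + a * x) = (b12 * x + b13) * (b11 * (z + a * x) + b12)) \/
    (forall x z, Df 0%nat x * Dg 0%nat (z + a * x) = 1 / b11 * (b11 * (z + a * x) + b12))).
  { intros Hz. exists 0, 0, 0, 0, 0, 0, 0, 0, 0, 0, 0, 0, 0, 0, 0.
    left. intros x z. rewrite Hz. ring. }
  destruct (Classical_Prop.classic (exists v0, Dg 2%nat v0 <> 0)) as [[v0 Hv0]|Hno].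
  2:{
    assert (G2 : forall v, Dg 2%nat v = 0).
    { intro v. destruct (Req_dec (Dg 2%nat v) 0) as [E|E]; auto. exfalso; apply Hno; eauto. }
    set (B := Dg 1%nat 0).
    assert (G1 : forall v, Dg 1%nat v = B).
    { intro v. rewrite (affine_of (Dg 1%nat) (Dg 2%nat) 0 (Hgd 1%nat) G2 v). unfold B; ring. }
    clearbody B.
    assert (G0 : forall v, Dg 0%nat v = Dg 0%nat 0 + B * v) by
      (apply (affine_of (Dg 0%nat) (Dg 1%nat) B (Hgd 0%nat) G1)).
    destruct (Req_dec B 0) as [HB|HB].
    - destruct (Req_dec (Dg 0%nat 0) 0) as [Hc|Hc].
      + exists 0, 0, 0, 0, 0, 0, 0, 0, 0, 0, 0, 0, 0, 0, 0.
        left. intros x z. rewrite G0, Hc, HB. ring.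
      + assert (F2 : forall x, Df 2%nat x = 0).
        { intro x. specialize (Om x 0). rewrite Omega_eq, G2, G1, G0, HB in Om.
          replace (Df 0%nat x * 0 * (1 - a ^ 2 + a ^ 2 * Df 0%nat x ^ 2 * 0 ^ 2) -
            (1 - Df 0%nat x ^ 2 * 0 ^ 2) * (Df 2%nat x * (Dg 0%nat 0 + 0 * 0) + 2 * a * Df 1%nat x * 0))
            with (- (Df 2%nat x * Dg 0%nat 0)) in Om by ring.
          assert (Df 2%nat x * Dg 0%nat 0 = 0) by lra.
          destruct (Rmult_integral _ _ H); auto. contradiction. }
        set (m := Df 1%nat 0).
        assert (F1 : forall x, Df 1%nat x = m).
        { intro x. rewrite (affine_of (Df 1%nat) (Df 2%nat) 0 (Hfd 1%nat) F2 x). unfold m; ring. }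
        clearbody m.
        assert (F0 := affine_of (Df 0%nat) (Df 1%nat) m (Hfd 0%nat) F1).
        exists 0, 0, 0, 0, 0, 0, 0, m, (Df 0%nat 0), (Dg 0%nat 0), 0, 0, 0, 0, 0.
        right; right; right; left. intros x z. rewrite F0, G0, HB. ring.
    - assert (F12 : forall x, Df 2%nat x = 0 /\ Df 1%nat x = 0).
      { intro x.
        assert (K : forall v, Df 2%nat x * (Dg 0%nat 0 + B * v) + 2 * a * Df 1%nat x * B = 0).
        { intro v. specialize (Om x v). specialize (Con x v).
          rewrite Omega_eq, G2, G1, G0 in Om. rewrite G1 in Con.
          assert (E : (1 - Df 0%nat x ^ 2 * B ^ 2) * (Df 2%nat x * (Dg 0%nat 0 + B * v) + 2 * a * Df 1%nat x * B) = 0).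
          { lra. }
          destruct (Rmult_integral _ _ E) as [E'|E']; auto.
          exfalso. replace ((Df 0%nat x * B) ^ 2) with (Df 0%nat x ^ 2 * B ^ 2) in Con by ring. lra. }
        assert (K0 := K 0). assert (K1 := K 1).
        assert (E : Df 2%nat x * B = 0) by lra.
        destruct (Rmult_integral _ _ E) as [E'|E']; [|contradiction].
        split; auto. rewrite E' in K0.
        assert (E2 : (2 * a * B) * Df 1%nat x = 0) by lra.
        destruct (Rmult_integral _ _ E2) as [E3|E3]; auto.
        exfalso. assert (2 * a * B <> 0).
        { repeat apply Rmult_integral_contrapositive_currified; auto; lra. }
        contradiction. }
      assert (F0 := affine_of (Df 0%nat) (Df 1%nat) 0 (Hfd 0%nat) (fun x => proj2 (F12 x))).
      exists (Df 0%nat 0), 0, B, (Dg 0%nat 0), 0, 0, 0, 0, 0, 0, 0, 0, 0, 0, 0.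
      left. intros x z. rewrite F0, G0. ring. }
  apply Zero.
  set (s := Dg 2%nat v0).
  assert (Hc2 := cont_of (Dg 2%nat) (Dg 3%nat) (Hgd 2%nat) v0).
  unfold continuity_pt, continue_in, limit1_in, limit_in in Hc2.
  destruct (Hc2 (Rabs s) ltac:(apply Rabs_pos_lt; exact Hv0)) as [alp [Halp Hal]].
  assert (Sg : forall w, Rabs (w - v0) < alp -> Dg 2%nat w * s > 0).
  { intros w Hw. destruct (Req_dec w v0) as [->|Hne].
    - unfold s. nra.
    - assert (Hd := Hal w (conj (conj I (not_eq_sym Hne)) Hw)). simpl in Hd.
      unfold R_dist in Hd. fold s in Hd.
      destruct (Rle_dec 0 s); [rewrite (Rabs_right s) in Hd by lra | rewrite (Rabs_left s) in Hd by lra];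
      apply Rabs_def2 in Hd; nra. }
  assert (Mono : forall u w, v0 - alp < u -> u < w -> w < v0 + alp -> (Dg 1%nat w - Dg 1%nat u) * s > 0).
  { intros u w H1 H2 H3.
    destruct (MVT_cor2 (Dg 1%nat) (Dg 2%nat) u w H2 (fun c _ => Hgd 1%nat c)) as [c [Hc Hcb]].
    rewrite Hc. assert (Dg 2%nat c * s > 0) by (apply Sg; apply Rabs_def1; lra). nra. }
  destruct (pick3 (Dg 1%nat) v0 alp s Halp Hv0 Mono) as
    (w1 & w2 & w3 & P1 & P2 & P3 & N1 & N2 & N3 & D12 & D13 & D23).
  assert (Z1 : Dg 2%nat w1 <> 0) by (intro E; specialize (Sg w1 P1); rewrite E in Sg; lra).
  assert (Z2 : Dg 2%nat w2 <> 0) by (intro E; specialize (Sg w2 P2); rewrite E in Sg; lra).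
  assert (Z3 : Dg 2%nat w3 <> 0) by (intro E; specialize (Sg w3 P3); rewrite E in Sg; lra).
  assert (K1 : Dg 1%nat w1 ^ 2 <> 0) by (apply pow_nonzero; auto).
  assert (K2 : Dg 1%nat w2 ^ 2 <> 0) by (apply pow_nonzero; auto).
  assert (K3 : Dg 1%nat w3 ^ 2 <> 0) by (apply pow_nonzero; auto).
  assert (Cf := cont_of (Df 0%nat) (Df 1%nat) (Hfd 0%nat)).
  assert (FC : forall x, Df 0%nat x = Df 0%nat 0).
  { destruct (Req_dec (Dg 0%nat w1 * Dg 1%nat w2 - Dg 0%nat w2 * Dg 1%nat w1) 0) as [Hm|Hm].
    - apply (f_const _ (S2 a (Dg 1%nat w1) (Dg 2%nat w1) (Dg 1%nat w2) (Dg 2%nat w2)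
                        (Dg 1%nat w1 ^ 2) (Dg 1%nat w2 ^ 2)) Cf).
      + apply S2_cubic.
      + exists (/ (Dg 1%nat w1 ^ 2)).
        replace (S2 a (Dg 1%nat w1) (Dg 2%nat w1) (Dg 1%nat w2) (Dg 2%nat w2)
          (Dg 1%nat w1 ^ 2) (Dg 1%nat w2 ^ 2) (/ Dg 1%nat w1 ^ 2))
          with (Dg 1%nat w2 * Dg 2%nat w1 * (Dg 1%nat w1 ^ 2 - Dg 1%nat w2 ^ 2) / Dg 1%nat w1 ^ 2)
          by (unfold S2; field; auto).
        unfold Rdiv. repeat apply Rmult_integral_contrapositive_currified; auto.
        * intro; lra.
        * apply Rinv_neq_0_compat; auto.
      + intro x. apply Rmult_integral.
        apply (S2_rel a _ (Df 1%nat x) (Df 2%nat x) (Dg 0%nat w1) _ _ (Dg 0%nat w2)); auto.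
    - apply (f_const _ (S3 a (Dg 0%nat w1) (Dg 1%nat w1) (Dg 2%nat w1)
                          (Dg 0%nat w2) (Dg 1%nat w2) (Dg 2%nat w2)
                          (Dg 0%nat w3) (Dg 1%nat w3) (Dg 2%nat w3)) Cf).
      + apply S3_cubic.
      + exists (/ (Dg 1%nat w3 ^ 2)).
        replace (S3 a (Dg 0%nat w1) (Dg 1%nat w1) (Dg 2%nat w1)
                          (Dg 0%nat w2) (Dg 1%nat w2) (Dg 2%nat w2)
                          (Dg 0%nat w3) (Dg 1%nat w3) (Dg 2%nat w3) (/ Dg 1%nat w3 ^ 2))
          with ((Dg 0%nat w1 * Dg 1%nat w2 - Dg 0%nat w2 * Dg 1%nat w1) * Dg 2%nat w3
                 * (Dg 1%nat w3 ^ 2 - Dg 1%nat w1 ^ 2) * (Dg 1%nat w3 ^ 2 - Dg 1%nat w2 ^ 2)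
                 / (Dg 1%nat w3 ^ 2 * Dg 1%nat w3 ^ 2))
          by (unfold S3; field; auto).
        unfold Rdiv. repeat apply Rmult_integral_contrapositive_currified; auto.
        * intro; lra.
        * intro; lra.
        * apply Rinv_neq_0_compat. apply Rmult_integral_contrapositive_currified; auto.
      + intro x. apply Rmult_integral.
        apply (S3_rel a _ (Df 1%nat x) (Df 2%nat x)); auto. }
  assert (FD1 := deriv_of_const (Df 0%nat) (Df 1%nat) _ FC (Hfd 0%nat)).
  assert (FD2 := deriv_of_const (Df 1%nat) (Df 2%nat) _ FD1 (Hfd 1%nat)).
  assert (F00 : Df 0%nat 0 = 0).
  { destruct (Req_dec (Df 0%nat 0) 0) as [E|E]; auto. exfalso.
    assert (O1 := Om 0 w1). assert (O2 := Om 0 w2).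
    rewrite Omega_eq, FD1, FD2 in O1, O2.
    set (F := Df 0%nat 0) in *. clearbody F.
    assert (X1 : F * Dg 2%nat w1 * (1 - a ^ 2 + a ^ 2 * F ^ 2 * Dg 1%nat w1 ^ 2) = 0) by lra.
    assert (X2 : F * Dg 2%nat w2 * (1 - a ^ 2 + a ^ 2 * F ^ 2 * Dg 1%nat w2 ^ 2) = 0) by lra.
    apply Rmult_integral in X1. destruct X1 as [X1|X1]; [apply Rmult_integral in X1; destruct X1; contradiction|].
    apply Rmult_integral in X2. destruct X2 as [X2|X2]; [apply Rmult_integral in X2; destruct X2; contradiction|].
    assert (X : (a^2 * F^2) * (Dg 1%nat w1 ^ 2 - Dg 1%nat w2 ^ 2) = 0) by (rewrite <- X1 at 1; lra).
    apply Rmult_integral in X. destruct X as [X|X].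
    - apply Rmult_integral in X. destruct X as [X|X]; apply pow_nonzero in X; auto.
    - apply D12. lra. }
  intro x. rewrite FC. exact F00.
Qed.
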